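(* For every rooted tree $T_r$, the vertex set of $T_r$ contains two disjoint homometric sets, each of size at least $f(T_r)$.
   Context: For a tree $T_r$ rooted at $r$, let $h(T_r)$ be the number of vertices on a longest path in $T_r$ starting at $r$ (so a single vertex has $h=1$); the empty tree $T_\emptyset$ has $h(T_\emptyset)=0$ and $f(T_\emptyset)=0$. For a vertex $v$, $T_v$ denotes the subtree rooted at $v$ consisting of $v$ and its descendants. The function $f$ is defined recursively: if $|V(T_r)|\le 1$ then $f(T_r)=0$; otherwise let the children of $r$ be $v_1,\dots,v_k$ ordered so that $h(T_{v_1})\ge h(T_{v_2})\ge\dots\ge h(T_{v_k})$, where, if the number of children is odd, an extra empty tree $T_{v_k}=T_\emptyset$ is appended so that $k$ is even; then $$f(T_r)=\max\Big\{\sum_{i=1}^{k} f(T_{v_i}),\ \sum_{i=1}^{k/2} h(T_{v_{2i}})\Big\}.$$ The profile of a vertex set is the multiset of pairwise distances (in the tree) between its distinct vertices; two disjoint vertex sets are homometric if their profiles are equal, and the size of the pair is the common cardinality. *)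

(* Defs.v *)
From mathcomp Require Import all_boot.
Set Implicit Arguments. Unset Strict Implicit. Unset Printing Implicit Defensive.

Inductive tree : Type := Node of seq tree.

(* h(T_r): number of vertices on a longest path starting at the root. *)
Fixpoint height (t : tree) : nat :=
  let: Node cs := t in (foldr maxn 0 (map height cs)).+1.

(* Given the heights of the children sorted nonincreasingly, padded with 0 (the
   empty tree) to even length k, sum of h(T_{v_{2i}}) for i = 1..k/2, i.e. the
   entries at 0-based positions 1,3,5,... *)
Definition even_pos_sum (hs : seq nat) : nat :=
  sumn [seq nth 0 hs (2 * i).+1 | i <- iota 0 (size hs).+1./2].

Fixpoint f (t : tree) : nat :=
  let: Node cs := t in
  if cs is [::] then 0 else
  maxn (sumn (map f cs)) (even_pos_sum (sort geq (map height cs))).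

(* Vertices are addressed by the sequence of child indices from the root. *)
Fixpoint is_vertex (t : tree) (a : seq nat) : bool :=
  match a with
  | [::] => true
  | i :: a' => let: Node cs := t in (i < size cs) && is_vertex (nth (Node [::]) cs i) a'
  end.

(* length of the longest common prefix of two addresses = depth of the LCA *)
Fixpoint lcp (a b : seq nat) : nat :=
  match a, b with
  | i :: a', j :: b' => if i == j then (lcp a' b').+1 else 0
  | _, _ => 0
  end.

(* Tree distance: number of edges of the unique path a -> lca -> b. *)
Definition tdist (a b : seq nat) : nat := size a + size b - 2 * lcp a b.

(* Profile of a vertex list (duplicate-free): the multiset (as a list, compared
   up to permutation) of the distances over all unordered pairs of distinct
   elements. *)
Definition profile (A : seq (seq nat)) : seq nat :=
  [seq tdist (nth [::] A i) (nth [::] A j)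
     | i <- iota 0 (size A), j <- iota i.+1 (size A - i.+1)].

Definition homometric (A B : seq (seq nat)) : Prop :=
  size A = size B /\ perm_eq (profile A) (profile B).

(* Main.v *)
Require Import Defs.
From mathcomp Require Import all_boot zify.
Set Implicit Arguments. Unset Strict Implicit. Unset Printing Implicit Defensive.

Fixpoint profF {T : Type} (F : T -> T -> nat) (s : seq T) : seq nat :=
  if s is x :: s' then map (F x) s' ++ profF F s' else [::].

Definition good (A B : seq (seq nat)) :=
  [/\ uniq A, uniq B, ~~ has (mem B) A, perm_eq (profF tdist A) (profF tdist B)
    & perm_eq (map size A) (map size B)].

Definition hd_in (P : pred nat) (x : seq nat) := if x is i :: _ then P i else false.

Lemma profF_cat (F : seq nat -> seq nat -> nat) X Y : perm_eq (profF F (X ++ Y))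
  (profF F X ++ profF F Y ++ [seq F x y | x <- X, y <- Y]).
Proof.
elim: X => [|x X IH] /=; first by rewrite cats0.
move/permP: IH => IH; apply/permP => p.
rewrite !count_cat map_cat count_cat IH !count_cat.
set a := count p (map _ X); set b := count p (map _ Y); set c := count p (profF F X);
set d := count p (profF F Y); set e := count p (flatten _).

lia.
Qed.

Lemma sep_tdist (P1 P2 : pred nat) x y : (forall i, P1 i -> P2 i -> False) ->
  hd_in P1 x -> hd_in P2 y -> tdist x y = size x + size y.
Proof.
move=> D; case: x => [|i a] //; case: y => [|j b] //= Hi Hj.
rewrite /tdist /=; case: eqP => [eij|_]; last by rewrite muln0 subn0.
by subst; case: (D _ Hi Hj).
Qed.

Lemma sep_neq (P1 P2 : pred nat) x y : (forall i, P1 i -> P2 i -> False) ->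
  hd_in P1 x -> hd_in P2 y -> x != y.
Proof.
move=> D; case: x => [|i a] //; case: y => [|j b] //= Hi Hj.
apply/eqP => [[eij _]]; subst; exact: (D _ Hi Hj).
Qed.

Lemma cross_eq (P1 P2 : pred nat) X Y : (forall i, P1 i -> P2 i -> False) ->
  all (hd_in P1) X -> all (hd_in P2) Y ->
  [seq tdist x y | x <- X, y <- Y] = [seq a + b | a <- map size X, b <- map size Y].
Proof.
move=> D /allP HX /allP HY.
rewrite allpairs_mapl allpairs_mapr; congr flatten; apply/eq_in_map => x Hx.
apply/eq_in_map => y Hy; exact: (sep_tdist D (HX _ Hx) (HY _ Hy)).
Qed.

Lemma join (P1 P2 : pred nat) A1 B1 A2 B2 : (forall i, P1 i -> P2 i -> False) ->
  all (hd_in P1) (A1 ++ B1) -> all (hd_in P2) (A2 ++ B2) ->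
  good A1 B1 -> good A2 B2 -> good (A1 ++ A2) (B1 ++ B2).
Proof.
move=> D; rewrite !all_cat => /andP [hA1 hB1] /andP [hA2 hB2].
case=> uA1 uB1 dAB1 pP1 pS1 [uA2 uB2 dAB2 pP2 pS2].
have nh (P Q : pred nat) X Y : (forall i, P i -> Q i -> False) -> all (hd_in P) X -> all (hd_in Q) Y ->
    ~~ has (mem X) Y.
  move=> DD /allP hX /allP hY; apply/hasPn => y Hy; apply/negP => Hx.
  by move: (sep_neq DD (hX _ Hx) (hY _ Hy)); rewrite eqxx.
have D' : forall i, P2 i -> P1 i -> False by move=> i a b; exact: D i b a.
split.
- by rewrite cat_uniq uA1 uA2 (nh _ _ _ _ D hA1 hA2).
- by rewrite cat_uniq uB1 uB2 (nh _ _ _ _ D hB1 hB2).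
- have ns (P Q : pred nat) x Y : (forall i, P i -> Q i -> False) -> hd_in P x ->
      all (hd_in Q) Y -> x \notin Y.
    move=> DD hx /allP hY; apply/negP => Hy.
    by move: (sep_neq DD hx (hY _ Hy)); rewrite eqxx.
  rewrite has_cat negb_or; apply/andP; split; apply/hasPn => x Hx; rewrite /= mem_cat negb_or.
    rewrite (hasPn dAB1 x Hx) /=; apply: (ns _ _ _ _ D _ hB2).
    exact: (allP hA1).
  rewrite (hasPn dAB2 x Hx) andbT; apply: (ns _ _ _ _ D' _ hB1).
  exact: (allP hA2).
- apply: (perm_trans (profF_cat _ _ _)).
  rewrite perm_sym; apply: (perm_trans (profF_cat _ _ _)); rewrite perm_sym.
  rewrite (cross_eq D hA1 hA2) (cross_eq D hB1 hB2).
  by rewrite (perm_cat pP1) // (perm_cat pP2) // perm_allpairs.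
- by rewrite !map_cat perm_cat.
Qed.

Lemma profF_map {T U : Type} (F : U -> U -> nat) (g : T -> U) s :
  profF F (map g s) = profF (fun x y => F (g x) (g y)) s.
Proof. by elim: s => //= x s ->; rewrite -map_comp. Qed.

Lemma profF_eq_in {T : eqType} (F G : T -> T -> nat) s :
  {in s &, F =2 G} -> profF F s = profF G s.
Proof.
elim: s => //= x s IH H; rewrite IH; last first.
  by move=> a b Ha Hb; apply: H; rewrite inE ?Ha ?Hb orbT.
congr (_ ++ _); apply/eq_in_map => y Hy; apply: H; by rewrite inE ?eqxx ?Hy ?orbT.
Qed.

Lemma tdist_cons i a b : tdist (i :: a) (i :: b) = tdist a b.
Proof. by rewrite /tdist /= eqxx mulnS !addSn addnS subSS. Qed.

Lemma good_cons i A B : good A B -> good (map (cons i) A) (map (cons i) B).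
Proof.
have inj : injective (cons i) by move=> x y [].
case=> uA uB dAB pP pS; split.
- by rewrite map_inj_uniq.
- by rewrite map_inj_uniq.
- by rewrite has_map; apply/hasPn => x Hx /=; rewrite mem_map // (hasPn dAB x Hx).
- rewrite !profF_map; have E : (fun x y => tdist (i :: x) (i :: y)) =2 tdist by move=> x y; exact: tdist_cons.
  have -> : profF (fun x y => tdist (i :: x) (i :: y)) A = profF tdist A by apply: profF_eq_in => x y _ _; exact: E.
  have -> : profF (fun x y => tdist (i :: x) (i :: y)) B = profF tdist B by apply: profF_eq_in => x y _ _; exact: E.
  by [].
- have E (X : seq (seq nat)) : map size (map (cons i) X) = map succn (map size X).
    by elim: X => //= x X ->.
  by rewrite !E perm_map.
Qed.

Lemma hd_in_sub (P Q : pred nat) x : (forall i, P i -> Q i) -> hd_in P x -> hd_in Q x.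
Proof. by case: x => //= i a H; exact: H. Qed.

Lemma all_hd_sub (P Q : pred nat) X : (forall i, P i -> Q i) -> all (hd_in P) X -> all (hd_in Q) X.
Proof. by move=> H /allP HX; apply/allP => x Hx; apply: hd_in_sub H (HX _ Hx). Qed.

Lemma good_nil : good [::] [::].
Proof. by split. Qed.

Definition T0 := Node [::].

Lemma optX cs :
  (forall k, k < size cs -> exists A B, good A B /\
      all (is_vertex (nth T0 cs k)) (A ++ B) /\ f (nth T0 cs k) <= size A) ->
  exists A B, good A B /\ all (is_vertex (Node cs)) (A ++ B) /\ sumn (map f cs) <= size A.
Proof.
move=> IH; set n := size cs.
suff : forall m, exists A B, good A B /\ all (hd_in (fun i => n - m <= i < n)) (A ++ B) /\
    all (is_vertex (Node cs)) (A ++ B) /\ sumn (map f (drop (n - m) cs)) <= size A.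
  by move=> /(_ n) [A [B [G [_ [V S]]]]]; exists A, B; rewrite subnn drop0 in S.
elim=> [|m [A [B [G [H [V S]]]]]].
  by exists [::], [::]; rewrite subn0 drop_size; split; [exact: good_nil|].
case: (leqP n m) => Hm.
  have E : n - m.+1 = n - m by lia.
  by exists A, B; rewrite E.
set k := n - m.+1.
have Hk : k < n by rewrite /k; lia.
have Ek : n - m = k.+1 by rewrite /k; lia.
rewrite Ek in H S.
case: (IH k Hk) => [A0 [B0 [G0 [V0 S0]]]].
exists (map (cons k) A0 ++ A), (map (cons k) B0 ++ B); split; last split; last split.
- apply: (join (P1 := pred1 k) (P2 := fun i => k.+1 <= i < n)) => //.
  + by move=> i /= /eqP -> ; rewrite ltnn.
  + by rewrite -map_cat all_map; apply/allP => x _ /=.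
  + exact: good_cons.
- rewrite !all_cat -!andbA; move: H; rewrite all_cat => /andP [HA HB].
  apply/and4P; split.
  + by rewrite all_map; apply/allP => x _ /=; rewrite leqnn Hk.
  + by apply: all_hd_sub HA => i /andP [a b]; rewrite b ltnW.
  + by rewrite all_map; apply/allP => x _ /=; rewrite leqnn Hk.
  + by apply: all_hd_sub HB => i /andP [a b]; rewrite b ltnW.
- rewrite !all_cat -!andbA; move: V; rewrite all_cat => /andP [VA VB].
  move: V0; rewrite all_cat => /andP [VA0 VB0].
  apply/and4P; split => //.
  + by rewrite all_map; apply/allP => x Hx /=; rewrite Hk (allP VA0).
  + by rewrite all_map; apply/allP => x Hx /=; rewrite Hk (allP VB0).
- rewrite (drop_nth T0 Hk) /= size_cat size_map; lia.
Qed.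

Lemma is_vertex_take t a j : is_vertex t a -> is_vertex t (take j a).
Proof.
elim: a t j => [|x a IH] [cs] [|j] //=.
by case/andP => -> /IH ->.
Qed.

Lemma lcp_take d j l : j <= size d -> l <= size d -> lcp (take j d) (take l d) = minn j l.
Proof.
elim: d j l => [|x d IH] [|j] [|l] //=; rewrite ?minn0 ?min0n // eqxx => Hj Hl.
by rewrite IH // minnSS.
Qed.

Definition PS p (d : seq nat) m := [seq p :: take j d | j <- iota 0 m].

Definition pdist (j l : nat) := j + l - 2 * minn j l.

Lemma PS_prof p d m : m <= (size d).+1 -> profF tdist (PS p d m) = profF pdist (iota 0 m).
Proof.
move=> Hm; rewrite profF_map; apply: profF_eq_in => j l Hj Hl.
rewrite mem_iota in Hj; rewrite mem_iota in Hl.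
by rewrite tdist_cons /tdist !size_takel ?lcp_take /pdist //; lia.
Qed.

Lemma PS_size p d m : m <= (size d).+1 -> map size (PS p d m) = map succn (iota 0 m).
Proof.
move=> Hm; rewrite -map_comp; apply/eq_in_map => j; rewrite mem_iota => Hj /=.
by rewrite size_takel //; lia.
Qed.

Lemma PS_uniq p d m : m <= (size d).+1 -> uniq (PS p d m).
Proof.
move=> Hm; rewrite map_inj_in_uniq ?iota_uniq // => j l; rewrite !mem_iota => Hj Hl [E].
have : size (take j d) = size (take l d) by rewrite E.
rewrite !size_takel //; lia.
Qed.

Lemma PS_hd p d m : all (hd_in (pred1 p)) (PS p d m).
Proof. by rewrite all_map; apply/allP => x _ /=. Qed.

Lemma PS_good p q dp dq m : p != q -> m <= (size dp).+1 -> m <= (size dq).+1 ->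
  good (PS p dp m) (PS q dq m).
Proof.
move=> pq Hp Hq; split.
- exact: PS_uniq.
- exact: PS_uniq.
- apply/hasPn => x Hx; apply/negP => Hy.
  have D : forall i, pred1 p i -> pred1 q i -> False.
    by move=> i /= /eqP -> /eqP E; rewrite E eqxx in pq.
  by move: (sep_neq D (allP (PS_hd p dp m) _ Hx) (allP (PS_hd q dq m) _ Hy)); rewrite eqxx.
- by rewrite !PS_prof.
- by rewrite !PS_size.
Qed.

Fixpoint tree_ind' (P : tree -> Prop)
  (HP : forall cs, (forall k, k < size cs -> P (nth T0 cs k)) -> P (Node cs)) (t : tree) : P t :=
  match t with
  | Node cs => HP cs ((fix g (cs : seq tree) : forall k, k < size cs -> P (nth T0 cs k) :=
       match cs return forall k, k < size cs -> P (nth T0 cs k) with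
       | [::] => fun k hk => False_ind _ (notF hk)
       | c :: cs' => fun k => match k return k < (size cs').+1 -> P (nth T0 (c :: cs') k) with
                     | 0 => fun _ => tree_ind' HP c
                     | k'.+1 => fun hk => g cs' k' hk
                     end
       end) cs)
  end.

Lemma height_pos t : 0 < height t.
Proof. by case: t. Qed.

Lemma argmax (s : seq nat) : s != [::] -> exists2 k, k < size s & nth 0 s k = foldr maxn 0 s.
Proof.
elim: s => [|x s IH] // _; case: s IH => [|y s] IH.
  by exists 0 => //=; rewrite maxn0.
case: IH => // k Hk Ek.
case: (leqP (foldr maxn 0 (y :: s)) x) => Hx.
  by exists 0 => //=; rewrite /= in Hx; rewrite (maxn_idPl Hx).
by exists k.+1 => //=; rewrite /= in Hx Ek; rewrite Ek (maxn_idPr (ltnW Hx)).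
Qed.

Lemma path_ex t : exists d, size d = (height t).-1 /\ is_vertex t d.
Proof.
elim/tree_ind': t => cs IH.
have [E|ne'] := altP (map height cs =P [::]).
  by exists [::]; case: cs E IH.
case: (argmax ne') => k; rewrite size_map => Hk; rewrite (nth_map T0) // => Ek.
case: (IH k Hk) => d [Sd Vd].
exists (k :: d); split; last by rewrite /= Hk.
by rewrite /= Sd -Ek prednK // height_pos.
Qed.

Definition Hc cs i := height (nth T0 cs i).

Fixpoint eps (s : seq nat) : nat :=
  match s with a :: b :: r => b + eps r | _ => 0 end.

Lemma optY cs (l : seq nat) : uniq l -> all (fun i => i < size cs) l ->
  sorted (fun i j => Hc cs j <= Hc cs i) l ->
  exists A B, good A B /\ all (hd_in (fun i => i \in l)) (A ++ B) /\
    all (is_vertex (Node cs)) (A ++ B) /\ eps (map (Hc cs) l) <= size A.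
Proof.
move: {2}(size l).+1 (ltnSn (size l)) => N; elim: N l => [|N IHN] l //.
case: l => [|p [|q r]] /= Hs.
- by move=> *; exists [::], [::]; split; [exact: good_nil|].
- by move=> *; exists [::], [::]; split; [exact: good_nil|].
rewrite !inE negb_or -!andbA => /and4P [pq pr qr ur] /and3P [Hp Hq Hr] /andP [Hpq Sr].
have Sr' : sorted (fun i j => Hc cs j <= Hc cs i) r by move: Sr => /= /path_sorted.
have [A [B [G [Hh [V S]]]]] := IHN r ltac:(lia) ur Hr Sr'.
have [dp [Sdp Vdp]] := path_ex (nth T0 cs p).
have [dq [Sdq Vdq]] := path_ex (nth T0 cs q).
set m := Hc cs q.
have hp := height_pos (nth T0 cs p); have hq := height_pos (nth T0 cs q).
have Hmp : m <= (size dp).+1 by rewrite Sdp prednK //.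
have Hmq : m <= (size dq).+1 by rewrite Sdq prednK.
exists (PS p dp m ++ A), (PS q dq m ++ B); split; last split; last split.
- apply: (join (P1 := fun i => i \in [:: p; q]) (P2 := fun i => i \in r)) => //.
  + move=> i; rewrite !inE => /orP [] /eqP -> H; [by rewrite H in pr | by rewrite H in qr].
  + rewrite all_cat; apply/andP; split; apply: all_hd_sub (PS_hd _ _ _) => i /eqP ->;
      by rewrite !inE eqxx ?orbT.
  + exact: PS_good.
- have sub : forall i, i \in r -> i \in [:: p, q & r] by move=> i Hi; rewrite !inE Hi !orbT.
  move: Hh; rewrite !all_cat => /andP [HA HB]; rewrite -!andbA; apply/and4P; split.
  + by apply: all_hd_sub (PS_hd _ _ _) => i /eqP ->; rewrite inE eqxx.
  + exact: all_hd_sub HA.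
  + by apply: all_hd_sub (PS_hd _ _ _) => i /eqP ->; rewrite !inE eqxx orbT.
  + exact: all_hd_sub HB.
- move: V; rewrite !all_cat => /andP [VA VB]; rewrite VA VB !andbT; apply/andP; split.
  + by rewrite all_map; apply/allP => j _ /=; rewrite Hp is_vertex_take.
  + by rewrite all_map; apply/allP => j _ /=; rewrite Hq is_vertex_take.
- by rewrite size_cat size_map size_iota leq_add2l.
Qed.

Lemma eps_even s : even_pos_sum s = eps s.
Proof.
move: {2}(size s).+1 (ltnSn (size s)) => N; elim: N s => [|N IHN] s //.
case: s => [|a [|b r]] //= Hs.
rewrite -IHN; last by lia.
rewrite /even_pos_sum /= -(addn0 1) iotaDl /= -map_comp; congr (_ + _).
congr sumn; apply: eq_map => i /=.
congr nth; rewrite -!plusE; lia.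
Qed.

Lemma main_good T : exists A B, good A B /\ all (is_vertex T) (A ++ B) /\ f T <= size A.
Proof.
elim/tree_ind': T => cs IH.
have [AX [BX [GX [VX SX]]]] := optX IH.
set n := size cs.
set idx := sort (relpre (Hc cs) geq) (iota 0 n).
have [|||AY [BY [GY [_ [VY SY]]]]] := optY (cs := cs) (l := idx).
- by rewrite sort_uniq iota_uniq.
- by apply/allP => i; rewrite mem_sort mem_iota.
- by apply: sort_sorted => i j; exact: leq_total.
have Ef : f (Node cs) <= maxn (sumn (map f cs)) (eps (map (Hc cs) idx)).
  rewrite /idx -sort_map.
  have -> : map (Hc cs) (iota 0 n) = map height cs.
    by rewrite /Hc (map_comp height (nth T0 cs)) -/(mkseq _ _) mkseq_nth.
  by case: cs {IH AX BX GX VX SX AY BY GY VY SY idx n} => //= c cs; rewrite eps_even.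
case: (leqP (sumn (map f cs)) (eps (map (Hc cs) idx))) => H.
- exists AY, BY; split => //; split => //; apply: leq_trans Ef _.
  by rewrite (maxn_idPr H).
- exists AX, BX; split => //; split => //; apply: leq_trans Ef _.
  by rewrite (maxn_idPl (ltnW H)).
Qed.
Lemma profileE A : profile A = profF tdist A.
Proof.
elim: A => [|x s IH] //=.
rewrite -IH /profile /= subn1 /=.
congr (_ ++ _).
  rewrite -(addn0 1) iotaDl -map_comp.
  rewrite -[in RHS](mkseq_nth [::] s) /mkseq -map_comp; apply: eq_map => j /=.
  by [].

rewrite -(addn0 1) iotaDl allpairs_mapl.
congr flatten; apply: eq_map => i /=.
rewrite subSS -[i.+2]/(1 + i.+1) iotaDl -map_comp; apply: eq_map => j /=.
by [].
Qed.

Theorem lemma1 (T : tree) :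
  exists A B : seq (seq nat),
    uniq A /\ uniq B /\ all (is_vertex T) A /\ all (is_vertex T) B /\
    ~~ has (mem B) A /\ homometric A B /\ f T <= size A.
Proof.
have [A [B [[uA uB dAB pP pS] [V S]]]] := main_good T.
move: V; rewrite all_cat => /andP [VA VB].
exists A, B; do 6!(split => //).
split; last by rewrite !profileE.
by rewrite -(size_map size A) (perm_size pS) size_map.
Qed.
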